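(* Let $V$ be a finite dimensional real vector space, let $S$ be a commutative subsemigroup of $GL(V)$ and let $G$ be its Zariski closure in $GL(V)$. Suppose that the orbit $Sx=\{sx: s\in S\}$ of some $x\in V$ is somewhere dense in $V$ (its closure contains a non-empty open subset of $V$). Then the map $G\to Gx$, $g\mapsto gx$, is a diffeomorphism of $G$ onto an open subset of $V$. In particular, $S$ is somewhere dense in $G$ (its closure in $G$ contains a non-empty open subset of $G$). *)

(* Defs.v *)
From HB Require Import structures.
From mathcomp Require Import all_boot all_order all_algebra.
From mathcomp Require Import all_classical all_reals all_analysis.
Set Implicit Arguments. Unset Strict Implicit. Unset Printing Implicit Defensive.
Import Order.TTheory GRing.Theory Num.Theory.
Import numFieldNormedType.Exports.
Local Open Scope classical_set_scope.
Local Open Scope ring_scope.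

(* V = R^n realized as column vectors 'cV[R]_n; GL(V) = invertible n x n matrices
   acting by left multiplication. *)

Inductive polyfun (R : realType) (n : nat) : ('M[R]_n -> R) -> Prop :=
  | polyfun_cst (c : R) : polyfun (fun _ => c)
  | polyfun_coord (i j : 'I_n) : polyfun (fun A => A i j)
  | polyfun_add p q : polyfun p -> polyfun q -> polyfun (fun A => p A + q A)
  | polyfun_mul p q : polyfun p -> polyfun q -> polyfun (fun A => p A * q A).

(* Zariski closure of S in GL_n(R): invertible matrices on which every polynomial
   function vanishing on S vanishes. (Zariski-closed subsets of GL_n are the
   traces on GL_n of Zariski-closed subsets of M_n, since det is invertible there.) *)
Definition zariski_closure_GL (R : realType) (n : nat) (S : set 'M[R]_n)
  : set 'M[R]_n :=
  [set g | g \in unitmx /\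
     forall p, polyfun p -> (forall s, S s -> p s = 0) -> p g = 0].

Definition comm_subsemigroup_GL (R : realType) (n : nat) (S : set 'M[R]_n) : Prop :=
  (forall s, S s -> s \in unitmx) /\
  (forall s t, S s -> S t -> S (s *m t)) /\
  (forall s t, S s -> S t -> s *m t = t *m s).

Definition somewhere_dense (T : topologicalType) (A : set T) : Prop :=
  exists O : set T, open O /\ O !=set0 /\ O `<=` closure A.

Fixpoint Ck (R : realType) (U W : normedModType R) (k : nat) (D : set U)
    (f : U -> W) : Prop :=
  match k with
  | 0 => {within D, continuous f}
  | k'.+1 => (forall y, D y -> differentiable f y) /\
             forall v : U, Ck k' D (fun y => 'D_v f y)
  end.

Definition smooth_on (R : realType) (U W : normedModType R) (D : set U)
    (f : U -> W) : Prop := forall k, Ck k D f.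

(* Main.v *)
Require Import Defs.
From HB Require Import structures.
From mathcomp Require Import all_boot all_order all_algebra.
From mathcomp Require Import all_classical all_reals all_analysis.
From mathcomp Require Import fingroup perm.
From mathcomp Require Import lra.
Import Order.TTheory GRing.Theory Num.Theory.
Import numFieldNormedType.Exports.
Local Open Scope classical_set_scope.
Local Open Scope ring_scope.

Section Helpers.
Variable R : realType.

Lemma Ck_cst (U W : normedModType R) k (D : set U) (c : W) :
  Ck k D (fun _ => c).
Proof.
elim: k c => [|k IH] c /=.
  by apply: continuous_subspaceT; exact: cst_continuous.
split; first by move=> y _; exact: differentiable_cst.
move=> v.
have -> : (fun y => 'D_v (fun _ : U => c) y) = (fun _ => 0).
  by apply/funext => y; exact: (derive_cst c y v).
exact: IH.
Qed.

Lemma Ck_lin (U W : normedModType R) k (D : set U) (f : U -> W) :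
  linear f -> continuous f -> Ck k D f.
Proof.
move=> lf cf.
pose fL : {linear U -> W} := HB.pack f (GRing.isLinear.Build _ _ _ _ _ lf).
case: k => [|k] /=.
  exact: continuous_subspaceT.
split.
  by move=> y _; exact: (@linear_differentiable _ _ _ fL y cf).
move=> v.
have -> : (fun y => 'D_v f y) = (fun _ => f v).
  apply/funext => y.
  rewrite (deriveE v (@linear_differentiable _ _ _ fL y cf)).
  by rewrite (@diff_lin _ _ _ fL y cf).
exact: Ck_cst.
Qed.

Lemma cont_sum (T : topologicalType) (I : Type) (r : seq I) (F : I -> T -> R^o) :
  (forall i, continuous (F i)) -> continuous (fun y => \sum_(i <- r) F i y).
Proof.
move=> Fc; elim: r => [|i r IH].
  have -> : (fun y => \sum_(i <- [::]) F i y) = (fun _ => 0) by apply/funext=> y; rewrite big_nil.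
  exact: cst_continuous.
have -> : (fun y => \sum_(j <- i :: r) F j y) = (F i + (fun y => \sum_(j <- r) F j y)).
  by apply/funext=> y; rewrite big_cons.
by move=> y; apply: continuousD; [exact: Fc|exact: IH].
Qed.

Lemma cont_entries (T : topologicalType) a b (f : T -> 'M[R]_(a, b)) :
  (forall i j, continuous (fun y => f y i j)) -> continuous f.
Proof.
move=> fc u A /nbhs_ballP [e e0 eA].
have H : \forall y \near u, forall ij : 'I_a * 'I_b, ball (f u ij.1 ij.2) e (f y ij.1 ij.2).
  apply: filter_forall => -[i j].
  exact: (fc i j u _ (nbhsx_ballx _ _ e0)).
apply: filterS H => y Hy; apply: eA; split => // i j.
exact: (Hy (i, j)).
Qed.

Lemma closure_cont (T U : topologicalType) (f : T -> U) (E : set T) v :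
  continuous f -> closure E v -> closure (f @` E) (f v).
Proof.
move=> fc cEv B /fc /cEv [e [Ee Be]].
by exists (f e); split => //; exists e.
Qed.


Lemma polyfun_sum n (I : Type) (r : seq I) (F : I -> 'M[R]_n -> R) :
  (forall i, polyfun (F i)) -> polyfun (fun A => \sum_(i <- r) F i A).
Proof.
move=> HF; elim: r => [|i r IH].
  have -> : (fun A : 'M[R]_n => \sum_(i <- [::]) F i A) = (fun _ => 0)
    by apply/funext=> y; rewrite big_nil.
  exact: polyfun_cst.
have -> : (fun A => \sum_(j <- i :: r) F j A) = (fun A => F i A + \sum_(j <- r) F j A).
  by apply/funext=> y; rewrite big_cons.
exact: polyfun_add.
Qed.

Lemma polyfun_prod n (I : Type) (r : seq I) (F : I -> 'M[R]_n -> R) :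
  (forall i, polyfun (F i)) -> polyfun (fun A => \prod_(i <- r) F i A).
Proof.
move=> HF; elim: r => [|i r IH].
  have -> : (fun A : 'M[R]_n => \prod_(i <- [::]) F i A) = (fun _ => 1)
    by apply/funext=> y; rewrite big_nil.
  exact: polyfun_cst.
have -> : (fun A => \prod_(j <- i :: r) F j A) = (fun A => F i A * \prod_(j <- r) F j A).
  by apply/funext=> y; rewrite big_cons.
exact: polyfun_mul.
Qed.

Lemma polyfun_opp n (p : 'M[R]_n -> R) : polyfun p -> polyfun (fun A => - p A).
Proof.
move=> hp.
have -> : (fun A => - p A) = (fun A => (-1) * p A) by apply/funext=> y; rewrite mulN1r.
by apply: polyfun_mul => //; exact: polyfun_cst.
Qed.

Lemma polyfun_cont n (p : 'M[R]_n -> R) : polyfun p -> continuous p.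
Proof.
elim => [c|i j|p1 q1 _ hp _ hq|p1 q1 _ hp _ hq].
- exact: cst_continuous.
- exact: coord_continuous.
- by move=> y; apply: (@continuousD _ R^o); [exact: hp|exact: hq].
- by move=> y; apply: continuousM; [exact: hp|exact: hq].
Qed.

Lemma polyfun_det n : polyfun (fun A : 'M[R]_n => \det A).
Proof.
have -> : (fun A : 'M[R]_n => \det A) = (fun A => \sum_(s : 'S_n) ((-1) ^+ s * \prod_i A i (s i))).
  by apply/funext => A.
apply: (@polyfun_sum n _ _ (fun (s : 'S_n) A => (-1) ^+ s * \prod_i A i (s i))) => s.
apply: polyfun_mul; first exact: polyfun_cst.
by apply: (@polyfun_prod n _ _ (fun i A => A i (s i))) => i; exact: polyfun_coord.
Qed.

Lemma polyfun_mulmx_entry n (s : 'M[R]_n) i j :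
  polyfun (fun A : 'M[R]_n => (A *m s) i j - (s *m A) i j).
Proof.
have -> : (fun A : 'M[R]_n => (A *m s) i j - (s *m A) i j) =
  (fun A => \sum_(k <- index_enum 'I_n) (A i k * s k j) +
           - \sum_(k <- index_enum 'I_n) (s i k * A k j)).
  by apply/funext => A; rewrite !mxE.
apply: polyfun_add; last apply: polyfun_opp.
  apply: (@polyfun_sum n _ _ (fun k A => A i k * s k j)) => k.
  by apply: polyfun_mul; [exact: polyfun_coord|exact: polyfun_cst].
apply: (@polyfun_sum n _ _ (fun k A => s i k * A k j)) => k.
by apply: polyfun_mul; [exact: polyfun_cst|exact: polyfun_coord].
Qed.


Definition linepoly n (h : 'cV[R]_n -> R) :=
  forall v w, exists q : {poly R}, forall t : R, h (v + t *: w) = q.[t].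
Arguments linepoly {n}.

Lemma linepoly_lin n (h : 'cV[R]_n -> R) :
  (forall v w (t : R), h (v + t *: w) = h v + t * h w) -> linepoly h.
Proof.
move=> hl v w; exists ((h v)%:P + (h w)%:P * 'X) => t.
by rewrite hl !hornerE mulrC.
Qed.

Lemma linepoly_polyfun n (Phi : 'cV[R]_n -> 'M[R]_n) (p : 'M[R]_n -> R) :
  (forall v w (t : R), Phi (v + t *: w) = Phi v + t *: Phi w) ->
  polyfun p -> linepoly (fun v => p (Phi v)).
Proof.
move=> hPhi; elim => [c|i j|p1 q1 _ hp _ hq|p1 q1 _ hp _ hq] v w.
- by exists c%:P => t; rewrite hornerE.
- exists ((Phi v i j)%:P + (Phi w i j)%:P * 'X) => t.
  by rewrite hPhi !mxE !hornerE mulrC.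
- have [q1' h1] := hp v w; have [q2' h2] := hq v w.
  by exists (q1' + q2') => t; rewrite h1 h2 hornerD.
- have [q1' h1] := hp v w; have [q2' h2] := hq v w.
  by exists (q1' * q2') => t; rewrite h1 h2 hornerM.
Qed.

Lemma key_zero n (E O : set 'cV[R]_n) (h : 'cV[R]_n -> R) :
  open O -> O !=set0 -> O `<=` closure E -> continuous h -> linepoly h ->
  (forall v, E v -> h v = 0) -> forall v, h v = 0.
Proof.
move=> oO [v0 Ov0] OE hc hlp hE.
have hO : forall u, O u -> h u = 0.
  move=> u /OE cu.
  have := @closure_cont _ _ h E u hc cu.
  have : closure (h @` E) `<=` [set x : R | x = 0].
    have sub : h @` E `<=` [set x : R | x = 0] by move=> _ [e Ee <-]; exact: hE.
    by move=> z /(closureS sub); apply: closed_eq.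
  by apply.
have nO : nbhs v0 O by move: oO; rewrite openE => /(_ v0 Ov0).
have [e e0 eO] := (nbhs_ballP _ _).1 nO.
move=> v; set w := v - v0.
have [q hq] := hlp v0 w.
have q0 : q = 0.
  apply/eqP/negPn/negP => qn0.
  pose d := e / (`|w| + 1).
  have d0 : 0 < d by apply: divr_gt0 => //; rewrite ltr_wpDl.
  pose rs := mkseq (fun k : nat => d / k.+1%:R) (size q).
  have : (size rs < size q)%N.
    apply: max_poly_roots => //.
      apply/allP => t /mapP [k _ ->]; rewrite /root -hq hO //.
      apply: eO; rewrite -ball_normE /ball_ /=.
      rewrite opprD addrA subrr sub0r normrN normrZ.
      have tle : `|d / k.+1%:R| <= d.
        rewrite ger0_norm; last by rewrite divr_ge0 // ltW.
        by rewrite ler_pdivrMr ?ltr0n // ler_peMr ?(ltW d0) // ler1n.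
      apply: (le_lt_trans (ler_wpM2r (normr_ge0 w) tle)).
      have w1 : 0 < `|w| + 1 by rewrite ltr_wpDl.
      by rewrite /d mulrAC ltr_pdivrMr // ltr_pM2l // ltrDl.
    apply: mkseq_uniq => a b /eqP; rewrite eqr_div ?pnatr_eq0 ?lt0r_neq0 //.
    by rewrite (inj_eq (mulfI (lt0r_neq0 d0))) eqr_nat => /eqP [].

  by rewrite size_mkseq ltnn.
have -> : v = v0 + 1 *: w by rewrite scale1r /w addrC subrK.
by rewrite hq q0 horner0.
Qed.


Arguments key_zero {n E O h}.
Arguments linepoly_lin {n h}.
Arguments linepoly_polyfun {n Phi p}.

Lemma mulmx_entry_cont a b c (y : 'M[R]_(b, c)) i j :
  continuous (fun A : 'M[R]_(a, b) => (A *m y) i j).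
Proof.
have -> : (fun A : 'M[R]_(a, b) => (A *m y) i j) =
  (fun A => \sum_(k <- index_enum 'I_b) (A i k * y k j)).
  by apply/funext => A; rewrite !mxE.
apply: (@cont_sum _ _ _ (fun k (A : 'M[R]_(a, b)) => A i k * y k j)) => k A.
by apply: continuousM; [exact: coord_continuous|exact: cst_continuous].
Qed.

Lemma mulmx_r_cont a b c (y : 'M[R]_(b, c)) :
  continuous (fun A : 'M[R]_(a, b) => A *m y).
Proof. by apply: cont_entries => i j; exact: mulmx_entry_cont. Qed.

Definition Nmat n m (f : 'I_m -> 'M[R]_n) (v : 'cV[R]_n) : 'M[R]_(m, n) :=
  \matrix_(i, j) (f i *m v) j 0.
Arguments Nmat {n m}.

Lemma Nmat_lin n m (f : 'I_m -> 'M[R]_n) a u v :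
  Nmat f (a *: u + v) = a *: Nmat f u + Nmat f v.
Proof.
by apply/matrixP => i j; rewrite mxE mulmxDr -scalemxAr !mxE.
Qed.

Definition psi n m (f : 'I_m -> 'M[R]_n) (B : 'M[R]_(n, m)) (v : 'cV[R]_n) : 'M[R]_n :=
  (B *m Nmat f v)^T.
Arguments psi {n m}.

Lemma psi_lin n m (f : 'I_m -> 'M[R]_n) (B : 'M[R]_(n, m)) : linear (psi f B).
Proof.
move=> a u v; rewrite /psi Nmat_lin mulmxDr -scalemxAr.
by rewrite linearD linearZ.
Qed.

Lemma psi_cont n m (f : 'I_m -> 'M[R]_n) (B : 'M[R]_(n, m)) : continuous (psi f B).
Proof.
apply: cont_entries => i j.
have -> : (fun v => psi f B v i j) =
  (fun v => \sum_(k <- index_enum 'I_m) (B j k * \sum_(l <- index_enum 'I_n) (f k i l * v l 0))).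
  by apply/funext => v; rewrite !mxE; apply: eq_bigr => k _; rewrite !mxE.
apply: (@cont_sum _ _ _ (fun k (v : 'cV[R]_n) => B j k * \sum_(l <- index_enum 'I_n) (f k i l * v l 0))) => k v.
apply: continuousM; first exact: cst_continuous.
apply: (@cont_sum _ _ _ (fun l (v : 'cV[R]_n) => f k i l * v l 0)) => l.
by move=> w; apply: continuousM; [exact: cst_continuous|exact: coord_continuous].
Qed.

Lemma psi_comm n m (f : 'I_m -> 'M[R]_n) (B : 'M[R]_(n, m)) (x : 'cV[R]_n) a :
  B *m Nmat f x = 1%:M -> (forall k, a *m f k = f k *m a) ->
  psi f B (a *m x) = a.
Proof.
move=> HB Ha; rewrite /psi.
have -> : Nmat f (a *m x) = Nmat f x *m a^T.
  apply/matrixP => i j; rewrite [LHS]mxE [RHS]mxE mulmxA -Ha -mulmxA mxE.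
  by apply: eq_bigr => k _; rewrite !mxE mulrC.
by rewrite mulmxA HB mul1mx trmxK.
Qed.


Lemma exists_basis n (S : set 'M[R]_n) (x : 'cV[R]_n) :
  somewhere_dense [set s *m x | s in S] ->
  exists m (f : 'I_m -> 'M[R]_n) (B : 'M[R]_(n, m)),
    (forall i, S (f i)) /\ B *m Nmat f x = 1%:M.
Proof.
move=> [U [oU [U0 UE]]].
pose P r := `[< exists m (f : 'I_m -> 'M[R]_n), (forall i, S (f i)) /\ \rank (Nmat f x) = r >].
have exP : exists r, P r.
  exists (\rank (Nmat (fun i : 'I_0 => (1%:M : 'M[R]_n)) x)); apply/asboolP.
  by exists 0%N, (fun i : 'I_0 => 1%:M); split => //; case.
have ubP : forall r, P r -> (r <= n)%N.
  by move=> r /asboolP [m [f [_ <-]]]; exact: rank_leq_col.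
case: (ex_maxnP exP ubP) => r /asboolP [m [f [Sf rk]]] maxr.
exists m, f.
suff : row_full (Nmat f x) by move=> /row_fullP [B HB]; exists B.
set N := Nmat f x.
have sub : forall s, S s -> ((s *m x)^T <= N)%MS.
  move=> s Ss.
  pose f' : 'I_(m + 1) -> 'M[R]_n := fun k => match fintype.split k with inl k' => f k' | inr _ => s end.
  have Nf' : Nmat f' x = col_mx N (s *m x)^T.
    apply/matrixP => i j; rewrite !mxE /f'.
    by case: (fintype.split i) => k; [|rewrite (ord1 k)]; rewrite /N !mxE.
  have Pf' : P (\rank (Nmat f' x)).
    apply/asboolP; exists (m + 1)%N, f'; split => //.
    by move=> k; rewrite /f'; case: (fintype.split k).
  have le1 := maxr _ Pf'.
  have sub1 : (N <= col_mx N (s *m x)^T)%MS by rewrite -addsmxE addsmxSl.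
  have := geq_leqif (mxrank_leqif_sup sub1).
  rewrite -Nf' /N rk le1 => /esym.
  by rewrite Nf' col_mx_sub => /andP [].
apply: contraT => nf.
have K0 : cokermx N != 0 by rewrite cokermx_eq0.
have [i [j Kij]] : exists i j, cokermx N i j != 0.
  apply: (contra_notP _ (elimN eqP K0)) => H.
  apply/matrixP => i j; rewrite [RHS]mxE; apply/eqP.
  by apply: contra_notT H => Hij; exists i, j.
pose h := fun v : 'cV[R]_n => (v^T *m cokermx N) 0 j.
have hz : forall v, h v = 0.
  apply: (key_zero oU U0 UE).
  - have -> : h = (fun v => \sum_(k <- index_enum 'I_n) (v k 0 * cokermx N k j)).
      by apply/funext => v; rewrite /h !mxE; apply: eq_bigr => k _; rewrite !mxE.
    apply: (@cont_sum _ _ _ (fun k (v : 'cV[R]_n) => v k 0 * cokermx N k j)) => k v.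
    by apply: continuousM; [exact: coord_continuous|exact: cst_continuous].
  - apply: linepoly_lin => v w t.
    by rewrite /h linearD linearZ /= mulmxDl -scalemxAl !mxE.
  - move=> _ [s Ss <-]; rewrite /h.
    have [D ->] := submxP (sub s Ss).
    by rewrite -mulmxA mulmx_coker mulmx0 mxE.
have := hz (delta_mx i 0).
rewrite /h trmx_delta -rowE mxE => Kz.
by move: Kij; rewrite Kz eqxx.
Qed.

End Helpers.
Arguments exists_basis {R n S x}.
Arguments psi {R n m} f B v.
Arguments Nmat {R n m} f v.
Arguments key_zero {R n E O h}.
Arguments linepoly_lin {R n h}.
Arguments linepoly_polyfun {R n Phi p}.
Arguments psi_comm {R n m f B x a}.
Arguments psi_lin {R n m f B}.
Arguments psi_cont {R n m} f B.
Arguments polyfun_mulmx_entry {R n} s i j.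
Arguments polyfun_cont {R n p}.
Arguments polyfun_det {R} n.
Arguments mulmx_r_cont {R a b c} y.
Arguments Ck_lin {R U W k D f}.
Arguments closure_cont {T U} f {E v}.

Theorem proposition3p2 (R : realType) (n : nat) (S : set 'M[R]_n) (x : 'cV[R]_n) :
  comm_subsemigroup_GL S ->
  somewhere_dense [set s *m x | s in S] ->
  let G := zariski_closure_GL S in
  (* g |-> g x is injective on G *)
  (forall g h, G g -> G h -> g *m x = h *m x -> g = h) /\
  (* its image G x is open in V *)
  open [set g *m x | g in G] /\
  (* it is smooth *)
  smooth_on setT (fun g : 'M[R]_n => g *m x) /\
  (* its inverse G x -> G is smooth (as a map into M_n(R) ⊇ G) *)
  (exists psi : 'cV[R]_n -> 'M[R]_n,
      (forall g, G g -> psi (g *m x) = g) /\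
      smooth_on [set g *m x | g in G] psi) /\
  (* in particular S is somewhere dense in G (subspace topology) *)
  (exists O : set 'M[R]_n, open O /\ (G `&` O) !=set0 /\ G `&` O `<=` closure S).
Proof.
move=> [Sunit [Smul Scomm]] sd G.
have [m [f [B [Sf HB]]]] := exists_basis sd.
move: sd => [U [oU [U0 UE]]].
pose ps := psi f B.
have GC : forall g, G g -> forall s, S s -> g *m s = s *m g.
  move=> g [_ Gp] s Ss; apply/matrixP => i j; apply/eqP; rewrite -subr_eq0; apply/eqP.
  apply: (Gp _ (polyfun_mulmx_entry s i j)) => s' Ss'.
  by rewrite Scomm // subrr.
have psiG : forall g, G g -> ps (g *m x) = g.
  by move=> g Gg; apply: psi_comm => // k; exact: GC.
have SG : forall s, S s -> G s.
  by move=> s Ss; split; [exact: Sunit|move=> p _; apply].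
have psiS : forall s, S s -> ps (s *m x) = s by move=> s /SG; exact: psiG.
have pslin : forall v w (t : R), ps (v + t *: w) = ps v + t *: ps w.
  by move=> v w t; rewrite /ps addrC psi_lin addrC.
have pscont : continuous ps := psi_cont f B.
have hP : forall p, polyfun p -> (forall s, S s -> p s = 0) -> forall v, p (ps v) = 0.
  move=> p pp pS; apply: (key_zero oU U0 UE).
  - by move=> v; exact: (continuous_comp (pscont v) (polyfun_cont pp (ps v))).
  - exact: linepoly_polyfun.
  - by move=> _ [s Ss <-]; rewrite psiS // pS.
have hx : forall v, ps v *m x = v.
  move=> v; apply/matrixP => i j; apply/eqP; rewrite -subr_eq0; apply/eqP; move: v.
  apply: (key_zero oU U0 UE).
  - have c1 : continuous (fun v => (ps v *m x) i j).
      have cA : continuous (fun A : 'M[R]_n => (A *m x) i j) by exact: mulmx_entry_cont.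
      by move=> v; exact: (continuous_comp (pscont v) (cA (ps v))).
    have c2 : continuous (fun v : 'cV[R]_n => v i j) by exact: coord_continuous.
    by move=> v; exact: (@continuousB _ R^o _ _ _ v (c1 v) (c2 v)).
  - apply: linepoly_lin => v w t.
    by rewrite pslin mulmxDl -scalemxAl !mxE; lra.
  - by move=> _ [s Ss <-]; rewrite psiS // subrr.
have Gx : [set g *m x | g in G] = (fun v => \det (ps v)) @^-1` [set r : R | r != 0].
  apply/seteqP; split.
    move=> _ [g Gg <-]; rewrite /= psiG //.
    by case: Gg => gu _; rewrite -unitfE -unitmxE.
  move=> v /= dv; exists (ps v) => //; split.
    by rewrite unitmxE unitfE.
  by move=> p pp pS; exact: hP.
have mxcont : continuous (fun g : 'M[R]_n => g *m x) := mulmx_r_cont x.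
have mxlin : linear (fun g : 'M[R]_n => g *m x).
  by move=> a u v; rewrite mulmxDl scalemxAl.
split.
  by move=> g h Gg Gh E; rewrite -(psiG g Gg) -(psiG h Gh) E.
split.
  rewrite Gx; apply: open_comp; last exact: open_neq.
  by move=> v _; exact: (continuous_comp (pscont v) (polyfun_cont (polyfun_det n) (ps v))).
split.
  by move=> k; apply: Ck_lin.
split.
  exists ps; split => // k; apply: Ck_lin => //; exact: psi_lin.
exists ((fun g : 'M[R]_n => g *m x) @^-1` U); split.
  by apply: open_comp => // g _; exact: mxcont.
split.
  have [v Uv] := U0.
  have nU : nbhs v U by move: oU; rewrite openE => /(_ v Uv).
  have [_ [[s Ss <-] Us]] := UE v Uv U nU.
  by exists s; split => //; exact: SG.
move=> g [Gg /= Ugx]; rewrite -(psiG g Gg).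
have := closure_cont ps pscont (UE _ Ugx).
apply: closureS => _ [_ [s Ss <-] <-]; by rewrite psiS.
Qed.
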